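(* Consider a finite discrete-time system $x_{k+1} = F(x_k,u_k,\theta,d_k)$ with finite sets $X,U,\Theta,D$, Boolean outputs $\mu_1,\dots,\mu_m : X\to\mathbb{B}$, atomic propositions $\Pi=\{\pi_1,\dots,\pi_m\}$ and observation map $O(x)=\{\pi_i \mid \mu_i(x)=\mathrm{True}\}$. Let $\varphi$ be an LTL formula over $\Pi$, and let $X_0^{\max}\subseteq X$ be the set defined in the context (obtained from the winning region of the Rabin game on the product of the adaptive transition system with the deterministic Rabin automaton of $\varphi$). Then for every initial condition $x_0\in X$ the following are equivalent: (i) there exists a control strategy $\Lambda^* : X^*\times U^*\to U$ such that, for every $\theta\in\Theta$ and every disturbance sequence $d_0d_1\cdots$ with $d_k\in D$, the trajectory $x_{k+1}=F(x_k,u_k,\theta,d_k)$ with $u_k=\Lambda^*(x_0\cdots x_k, u_0\cdots u_{k-1})$ produces a word $O(x_0)O(x_1)\cdots$ satisfying $\varphi$; (ii) $x_0\in X_0^{\max}$.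
   Context: System: $F: X\times U\times\Theta\times D\to X$; the parameter $\theta$ is constant but unknown to the controller, while the disturbance $d$ may vary arbitrarily in $D$ at each step. $2^\Theta_{-\emptyset}$ denotes the set of nonempty subsets of $\Theta$. Parametric transition system (embedding): $\gamma(x,u,\theta)=\{F(x,u,\theta,d)\mid d\in D\}$. Recursive parameter estimator: for $\vartheta\in 2^\Theta_{-\emptyset}$, $x,x'\in X$, $u\in U$, $\Gamma_{rec}(\vartheta,x,u,x')=\{\theta\in\vartheta \mid x'\in\gamma(x,u,\theta)\}$. Adaptive transition system (ATS): states $X^{adp}\subseteq X\times 2^\Theta_{-\emptyset}$ are those reachable from $\{(x,\Theta)\mid x\in X\}$ under the transition function $\gamma^{adp}$, where $(x',\vartheta')\in\gamma^{adp}((x,\vartheta),u)$ iff $x'\in\gamma(x,u,\theta)$ for some $\theta\in\vartheta$ and $\vartheta'=\Gamma_{rec}(\vartheta,x,u,x')$; observation $O^{adp}(x,\vartheta)=O(x)$. Deterministic Rabin automaton (DRA) $\mathcal{R}_\varphi=(S,s^0,2^\Pi,\alpha,\Omega)$ with transition function $\alpha:S\times 2^\Pi\to S$ and pairs $\Omega=\{(F_1,I_1),\dots,(F_r,I_r)\}$, $F_i,I_i\subseteq S$, accepting exactly the words satisfying $\varphi$; a run is accepting if for some $i$ it visits $F_i$ finitely often and $I_i$ infinitely often. Product: states $X^{adp}\times S$, controls $U$, with $((x',\vartheta'),s')$ a successor of $((x,\vartheta),s)$ under $u$ iff $(x',\vartheta')\in\gamma^{adp}((x,\vartheta),u)$ and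 $s'=\alpha(s,O(x))$; Rabin pairs $F_i^P=X^{adp}\times F_i$, $I_i^P=X^{adp}\times I_i$. The Rabin game: the controller chooses $u$, the adversary chooses a successor; the winning region is the set of product states from which the controller has a strategy guaranteeing that every resulting run satisfies the Rabin condition for some pair. Let $X_0^{adp,\max}$ be the set of states $y\in X^{adp}$ such that $(y,s^0)$ lies in the winning region, and $X_0^{\max}=\{x_0\in X\mid (x_0,\Theta)\in X_0^{adp,\max}\}$. *)

(* Defs.v *)
From mathcomp Require Import all_boot.
Set Implicit Arguments. Unset Strict Implicit. Unset Printing Implicit Defensive.

Inductive ltl (m : nat) : Type :=
  | LTrue
  | LAtom of 'I_m
  | LNot of ltl m
  | LAnd of ltl m & ltl m
  | LNext of ltl m
  | LUntil of ltl m & ltl m.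

Definition word (m : nat) := nat -> {set 'I_m}.

Fixpoint ltl_sat (m : nat) (w : word m) (k : nat) (f : ltl m) : Prop :=
  match f with
  | LTrue => True
  | LAtom i => i \in w k
  | LNot g => ~ ltl_sat w k g
  | LAnd g h => ltl_sat w k g /\ ltl_sat w k h
  | LNext g => ltl_sat w k.+1 g
  | LUntil g h => exists j, k <= j /\ ltl_sat w j h /\
                    forall i, k <= i -> i < j -> ltl_sat w i g
  end.

Definition ltl_models (m : nat) (w : word m) (f : ltl m) : Prop := ltl_sat w 0 f.

Definition inf_often (T : Type) (r : nat -> T) (P : T -> Prop) : Prop :=
  forall N, exists k, N <= k /\ P (r k).
Definition fin_often (T : Type) (r : nat -> T) (P : T -> Prop) : Prop :=
  exists N, forall k, N <= k -> ~ P (r k).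

Definition rabin_ok (S : finType) (Omega : seq ({set S} * {set S}))
  (r : nat -> S) : Prop :=
  exists2 FI, FI \in Omega &
    fin_often r (fun s => s \in FI.1) /\ inf_often r (fun s => s \in FI.2).

Record DRA (m : nat) := {
  dra_S : finType;
  dra_s0 : dra_S;
  dra_alpha : dra_S -> {set 'I_m} -> dra_S;
  dra_Omega : seq ({set dra_S} * {set dra_S})
}.
Arguments dra_S {m} d.
Arguments dra_s0 {m} d.
Arguments dra_alpha {m} d _ _.
Arguments dra_Omega {m} d.

Definition dra_run (m : nat) (R : DRA m) (w : word m) (r : nat -> dra_S R) : Prop :=
  r 0 = dra_s0 R /\ forall k, r k.+1 = dra_alpha R (r k) (w k).

Arguments dra_run {m} R w r.
Definition dra_accepts (m : nat) (R : DRA m) (w : word m) : Prop :=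
  exists r, dra_run R w r /\ rabin_ok (dra_Omega R) r.

Definition dra_of_ltl (m : nat) (R : DRA m) (phi : ltl m) : Prop :=
  forall w : word m, dra_accepts R w <-> ltl_models w phi.

Section System.
Variables (X U Theta D : finType) (F : X -> U -> Theta -> D -> X).
Variables (m : nat) (mu : 'I_m -> X -> bool).

Definition obs (x : X) : {set 'I_m} := [set i | mu i x].

Definition in_gamma (x : X) (u : U) (th : Theta) (x' : X) : bool :=
  [exists d : D, F x u th d == x'].

Definition Gamma_rec (vt : {set Theta}) (x : X) (u : U) (x' : X) : {set Theta} :=
  [set th in vt | in_gamma x u th x'].

Definition adp_step (y : X * {set Theta}) (u : U) (y' : X * {set Theta}) : Prop :=
  (exists2 th, th \in y.2 & in_gamma y.1 u th y'.1) /\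
  y'.2 = Gamma_rec y.2 y.1 u y'.1.

(* states of the ATS: reachable from {(x, Theta)} *)
Inductive Xadp : X * {set Theta} -> Prop :=
  | Xadp_init x : Xadp (x, [set: Theta])
  | Xadp_step y u y' : Xadp y -> adp_step y u y' -> Xadp y'.

Variable R : DRA m.

Definition pstate := ((X * {set Theta}) * dra_S R)%type.

Definition prod_step (p : pstate) (u : U) (p' : pstate) : Prop :=
  adp_step p.1 u p'.1 /\ p'.2 = dra_alpha R p.2 (obs p.1.1).

Definition gstrategy := seq pstate -> U.

Definition consistent_play (sigma : gstrategy) (p0 : pstate) (p : nat -> pstate) : Prop :=
  p 0 = p0 /\ forall k, prod_step (p k) (sigma (mkseq p k.+1)) (p k.+1).

Definition winning (p0 : pstate) : Prop :=
  exists sigma : gstrategy, forall p, consistent_play sigma p0 p ->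
    rabin_ok [seq (setX setT FI.1, setX setT FI.2) | FI <- dra_Omega R]
      (fun k => p k).

Definition X0adp_max (y : X * {set Theta}) : Prop :=
  Xadp y /\ winning (y, dra_s0 R).

Definition X0_max (x0 : X) : Prop := X0adp_max (x0, [set: Theta]).
End System.

(* Main.v *)
Require Import Defs.
From mathcomp Require Import all_boot.
From Stdlib Require Import Classical.
Set Implicit Arguments. Unset Strict Implicit.

Lemma mkseq_ext_lt (T : Type) (f g : nat -> T) n :
  (forall i, i < n -> f i = g i) -> mkseq f n = mkseq g n.
Proof.
move=> H; rewrite /mkseq; apply/eq_in_map => i; rewrite mem_iota add0n => /andP[_ Hi].
exact: H.
Qed.

Lemma take_mkseq' (T : Type) (f : nat -> T) n N : n <= N -> take n (mkseq f N) = mkseq f n.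
Proof.
move=> hn; rewrite /mkseq -map_take; congr map.
have -> : N = n + (N - n) by rewrite subnKC.
by rewrite iotaD take_size_cat // size_iota.
Qed.

Lemma mono_sub (T : finType) (f : nat -> {set T}) :
  (forall k, f k.+1 \subset f k) -> forall i j, i <= j -> f j \subset f i.
Proof.
move=> H i j /subnKC <-; elim: (j - i) => [|n IH]; first by rewrite addn0.
by rewrite addnS; apply: subset_trans (H _) IH.
Qed.

Lemma stabilize (T : finType) (f : nat -> {set T}) :
  (forall k, f k.+1 \subset f k) -> exists K, forall k, K <= k -> f k = f K.
Proof.
move: {2}#|f 0| (leqnn #|f 0|) => n; elim: n f => [|n IH] f Hc H.
- exists 0 => k _; apply/eqP; rewrite eqEcard (mono_sub H) //=.
  by apply: leq_trans Hc _.
- destruct (classic (forall k, f k = f 0)) as [Hall|Hn].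
  + by exists 0 => k _; apply: Hall.
  + apply not_all_ex_not in Hn; case: Hn => k Hk.
    have Hp : f k \proper f 0 by rewrite properEneq (mono_sub H) // andbT; apply/eqP.
    have Hlt := proper_card Hp.
    have Hm : forall i, f (k + i.+1) \subset f (k + i) by move=> i; rewrite addnS; apply: H.
    have Hc' : #|f (k + 0)| <= n by rewrite addn0; exact: ltnSE (leq_trans Hlt Hc).
    have [K' HK'] := IH (fun i => f (k + i)) Hc' Hm.
    exists (k + K') => j Hj.
    have := HK' (j - k); rewrite subnKC ?(leq_trans (leq_addr _ _) Hj) //; apply.
    by rewrite leq_subRL // (leq_trans (leq_addr _ _) Hj).
Qed.

Lemma rabin_map (S A : finType) (Om : seq ({set S} * {set S})) (p : nat -> A * S) (s : nat -> S) :
  (forall k, (p k).2 = s k) ->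
  rabin_ok [seq (setX setT FI.1, setX setT FI.2) | FI <- Om] p <-> rabin_ok Om s.
Proof.
move=> Hs; split.
- case=> FI' /mapP[FI HFI ->] /= [[N HN] Hinf]; exists FI => //; split.
  + exists N => k Hk; move: (HN k Hk); rewrite /= -Hs.
    by case: (p k) => a b; rewrite in_setX in_setT.
  + move=> M; case: (Hinf M) => k [Hk Hin]; exists k; split => //; move: Hin; rewrite /= -Hs.
    by case: (p k) => a b; rewrite in_setX in_setT.
- case=> FI HFI [[N HN] Hinf]; exists (setX setT FI.1, setX setT FI.2).
  + by apply/mapP; exists FI.
  + split.
    * exists N => k Hk; move: (HN k Hk); rewrite /= -Hs.
      by case: (p k) => a b; rewrite in_setX in_setT.
    * move=> M; case: (Hinf M) => k [Hk Hin]; exists k; split => //; move: Hin; rewrite /= -Hs.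
      by case: (p k) => a b; rewrite in_setX in_setT.
Qed.

Lemma map_mkseq' (A B : Type) (g : A -> B) (f : nat -> A) n : map g (mkseq f n) = mkseq (g \o f) n.
Proof. by rewrite /mkseq -map_comp. Qed.

Fixpoint pstf (X U Theta D : finType) (F : X -> U -> Theta -> D -> X) m
  (mu : 'I_m -> X -> bool) (R : DRA m) (xf : nat -> X) (uf : nat -> U) (k : nat)
  : (X * {set Theta}) * dra_S R :=
  match k with
  | 0 => ((xf 0, setT), dra_s0 R)
  | k'.+1 => let q := pstf F mu R xf uf k' in
      ((xf k, Gamma_rec F q.1.2 q.1.1 (uf k') (xf k)), dra_alpha R q.2 (obs mu q.1.1))
  end.

Lemma pstf_fst (X U Theta D : finType) (F : X -> U -> Theta -> D -> X) m
  (mu : 'I_m -> X -> bool) (R : DRA m) xf uf k : (pstf F mu R xf uf k).1.1 = xf k.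
Proof. by case: k. Qed.

Lemma pstf_ext (X U Theta D : finType) (F : X -> U -> Theta -> D -> X) m
  (mu : 'I_m -> X -> bool) (R : DRA m) xf uf xg ug k :
  (forall i, i <= k -> xf i = xg i) -> (forall i, i < k -> uf i = ug i) ->
  pstf F mu R xf uf k = pstf F mu R xg ug k.
Proof.
elim: k => [|k IH] Hx Hu /=; first by rewrite Hx.
rewrite IH; last 2 first.
- by move=> i Hi; apply: Hx; apply: leqW.
- by move=> i Hi; apply: Hu; apply: ltnW.
by rewrite Hx // Hu.
Qed.

Lemma dir2 (X U Theta D : finType) (F : X -> U -> Theta -> D -> X)
  (m : nat) (mu : 'I_m -> X -> bool) (phi : ltl m) (R : DRA m)
  (HR : dra_of_ltl R phi) (x0 : X) :
  X0_max F mu R x0 ->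
  (exists Lam : seq X -> seq U -> U,
     forall (th : Theta) (d : nat -> D) (x : nat -> X) (u : nat -> U),
       x 0 = x0 ->
       (forall k, u k = Lam (mkseq x k.+1) (mkseq u k)) ->
       (forall k, x k.+1 = F (x k) (u k) th (d k)) ->
       ltl_models (fun k => obs mu (x k)) phi).
Proof.
case=> _ [sigma Hwin].
pose u0 := sigma [::].
exists (fun xs us => sigma (mkseq (pstf F mu R (nth x0 xs) (nth u0 us)) (size xs))).
move=> th d x u hx0 hu hx.
pose p := pstf F mu R x u.
have Hsig : forall k, sigma (mkseq p k.+1) = u k.
  move=> k; rewrite hu size_mkseq; congr sigma; apply: mkseq_ext_lt => i Hi.
  apply: pstf_ext => j Hj; rewrite nth_mkseq //.
  - exact: leq_ltn_trans Hj Hi.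
  - exact: leq_trans Hj (ltnSE Hi).
have Hth : forall k, th \in (p k).1.2.
  elim=> [|k IH]; first by rewrite in_setT.
  rewrite /= inE IH /= pstf_fst; apply/existsP; exists (d k); by rewrite hx.
have Hplay : consistent_play F mu sigma ((x0, setT), dra_s0 R) p.
  split; first by rewrite /p /= hx0.
  move=> k; rewrite Hsig; split; last by [].
  split; last by rewrite /= pstf_fst.
  exists th; first exact: Hth.
  rewrite /= !pstf_fst; apply/existsP; exists (d k); by rewrite hx.
have Hr := Hwin p Hplay.
have Hr' := (rabin_map (s := fun k => (p k).2) _ (fun k => erefl)).1 Hr.
apply/HR; exists (fun k => (p k).2); split => //; split => // k.
by rewrite /= pstf_fst.
Qed.

Fixpoint ussq (X U : Type) (Lam : seq X -> seq U -> U) (xs : seq X) (n : nat) : seq U :=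
  match n with
  | 0 => [::]
  | n'.+1 => rcons (ussq Lam xs n') (Lam (take n'.+1 xs) (ussq Lam xs n'))
  end.

Lemma dir1 (X U Theta D : finType) (F : X -> U -> Theta -> D -> X)
  (m : nat) (mu : 'I_m -> X -> bool) (phi : ltl m) (R : DRA m)
  (HR : dra_of_ltl R phi) (x0 : X) :
  (exists Lam : seq X -> seq U -> U,
     forall (th : Theta) (d : nat -> D) (x : nat -> X) (u : nat -> U),
       x 0 = x0 ->
       (forall k, u k = Lam (mkseq x k.+1) (mkseq u k)) ->
       (forall k, x k.+1 = F (x k) (u k) th (d k)) ->
       ltl_models (fun k => obs mu (x k)) phi) ->
  X0_max F mu R x0.
Proof.
case=> Lam H; split; first exact: Xadp_init.
pose sigma := fun hist : seq (pstate X Theta R) =>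
  let xs := map (fun q => q.1.1) hist in Lam xs (ussq Lam xs (size hist).-1).
exists sigma => p [hp0 hstep].
pose x := fun k => (p k).1.1.
pose u := fun k => sigma (mkseq p k.+1).
pose vt := fun k => (p k).1.2.
have Hmono : forall k, vt k.+1 \subset vt k.
  move=> k; case: (hstep k) => [[_ Heq] _]; rewrite /vt Heq /Gamma_rec.
  by apply/subsetP => t; rewrite inE => /andP[].
have Hne : forall k, exists2 t, t \in vt k.+1 & t \in vt k.
  move=> k; case: (hstep k) => [[[t Ht Hg] Heq] _]; exists t => //.
  by rewrite /vt Heq inE Ht Hg.
have [K HK] := stabilize Hmono.
case: (Hne K) => th HthK _.
have Hth : forall k, th \in vt k.
  move=> k; case: (leqP k K.+1) => Hk.
  - exact: (subsetP (mono_sub Hmono Hk)).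
  - by rewrite HK ?(ltnW (ltnW Hk)) // -(HK K.+1) // leqnSn.
have Hg : forall k, in_gamma F (x k) (u k) th (x k.+1).
  move=> k; have := Hth k.+1; case: (hstep k) => [[_ Heq] _].
  by rewrite /vt Heq inE => /andP[].
have ex0 : exists dd : D, true by case/existsP: (Hg 0) => dd _; exists dd.
pose d0 := xchoose ex0.
pose d := fun k => odflt d0 [pick dd | F (x k) (u k) th dd == x k.+1].
have Hd : forall k, x k.+1 = F (x k) (u k) th (d k).
  move=> k; rewrite /d; case: pickP => [dd /eqP -> //|Hn].
  by case/existsP: (Hg k) => dd; rewrite Hn.
have Hus : forall n N, n < N -> ussq Lam (mkseq x N) n = mkseq u n.
  elim=> [//|n IH] N HN /=.
  rewrite IH ?(ltnW HN) // mkseqS take_mkseq' ?(ltnW HN) //; f_equal.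
  rewrite [RHS]/u /sigma size_mkseq map_mkseq' /=.
  by rewrite (eq_mkseq (g := x)) // IH.
have Hu : forall k, u k = Lam (mkseq x k.+1) (mkseq u k).
  move=> k; rewrite [LHS]/u /sigma size_mkseq map_mkseq' /=.
  by rewrite (eq_mkseq (g := x)) // Hus.
have Hx0 : x 0 = x0 by rewrite /x hp0.
have := H th d x u Hx0 Hu Hd => /HR [r [[r0 rS] Hrab]].
have Hr : forall k, (p k).2 = r k.
  elim=> [|k IH]; first by rewrite hp0 r0.
  by case: (hstep k) => _ ->; rewrite rS IH.
exact: (proj2 (rabin_map (dra_Omega R) Hr) Hrab).
Qed.

Theorem mainTheorem3 (X U Theta D : finType) (F : X -> U -> Theta -> D -> X)
  (m : nat) (mu : 'I_m -> X -> bool) (phi : ltl m) (R : DRA m)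
  (HR : dra_of_ltl R phi) (x0 : X) :
  (exists Lam : seq X -> seq U -> U,
     forall (th : Theta) (d : nat -> D) (x : nat -> X) (u : nat -> U),
       x 0 = x0 ->
       (forall k, u k = Lam (mkseq x k.+1) (mkseq u k)) ->
       (forall k, x k.+1 = F (x k) (u k) th (d k)) ->
       ltl_models (fun k => obs mu (x k)) phi)
  <-> X0_max F mu R x0.
Proof.
split; [exact: dir1 | exact: dir2].
Qed.
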